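(* Let $Q\colon \mathbb{R}^n\to\mathbb{R}$ be a quadratic form, and let $\mathbb{R}^n_+=\{(a_1,\dots,a_n)\mid a_i\ge 0 \text{ for all } i\}$ with interior $\mathrm{Int}(\mathbb{R}^n_+)=\{(a_1,\dots,a_n)\mid a_i>0 \text{ for all } i\}$. Assume there exist $a,b\in\mathbb{R}^n_+$ with $Q(a)>0$ and $Q(b)<0$. Then there exists an open set $U\subset \mathrm{Int}(\mathbb{R}^n_+)$ such that $U\cap Q^{-1}(0)$ is a nonempty smooth submanifold of $U$ of codimension $1$. *)

(* Defs.v *)
From HB Require Import structures.
From mathcomp Require Import all_boot all_order all_algebra.
From mathcomp Require Import all_classical all_reals all_analysis.
Set Implicit Arguments. Unset Strict Implicit. Unset Printing Implicit Defensive.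
Import Order.TTheory GRing.Theory Num.Theory.
Import numFieldNormedType.Exports.
Local Open Scope classical_set_scope.
Local Open Scope ring_scope.

(* R^n is represented by row vectors 'rV[R]_n; x 0 i is the i-th coordinate. *)

(* The quadratic form on R^n with (coefficient) matrix A:
   Q_A(x) = sum_{i,j} A_{ij} x_i x_j.  Every quadratic form has this shape. *)
Definition qform (R : realType) (n : nat) (A : 'M[R]_n) (x : 'rV[R]_n) : R :=
  \sum_(i < n) \sum_(j < n) A i j * x 0 i * x 0 j.

Fixpoint iter_dderiv (R : realType) (V : normedModType R) (vs : seq V)
  (f : V -> R) : V -> R :=
  match vs with
  | [::] => f
  | v :: vs' => fun x => derive (iter_dderiv vs' f) x v
  end.

Definition smooth_on (R : realType) (V : normedModType R) (W : set V)
  (f : V -> R) : Prop :=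
  forall (vs : seq V) (x : V), W x ->
    (forall v : V, derivable (iter_dderiv vs f) x v) /\
    {for x, continuous (iter_dderiv vs f)}.

(* Z is a smooth embedded submanifold of codimension 1 of the open set U:
   locally near each of its points it is the zero set of a smooth function
   with nonvanishing differential (regular level set). *)
Definition smooth_hypersurface_of (R : realType) (V : normedModType R)
  (U Z : set V) : Prop :=
  Z `<=` U /\
  forall p, Z p ->
    exists (W : set V) (f : V -> R),
      [/\ open W, W p, W `<=` U, smooth_on W f &
          Z `&` W = [set x | W x /\ f x = 0]] /\
      (forall x, Z x -> W x -> exists v : V, derive f x v != 0).

(* Main.v *)
Require Import Defs.
From HB Require Import structures.
From mathcomp Require Import all_boot all_order all_algebra.
From mathcomp Require Import all_classical all_reals all_analysis.
From mathcomp Require Import ring lra.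
Import Order.TTheory GRing.Theory Num.Theory.
Import numFieldNormedType.Exports.
Local Open Scope classical_set_scope.
Local Open Scope ring_scope.

Section Gen.
Variables (R : realType) (V : normedModType R).

Lemma quad_derive (f : V -> R) x v (L M : R) :
  (forall h : R, f (h *: v + x) = f x + h * L + h ^+ 2 * M) ->
  derivable f x v /\ derive f x v = L.
Proof.
move=> H.
have E : (fun h : R => h^-1 *: ((f \o shift x) (h *: v) - f x)) @ 0^' --> L.
  have C : (fun h : R => L + h * M) @ 0^' --> L.
    apply: cvg_within_filter.
    have : (fun h : R => L + h * M) @ 0 --> L + 0 * M.
      apply: cvgD; first exact: cvg_cst.
      apply: cvgM; [exact: cvg_id | exact: cvg_cst].
    by rewrite mul0r addr0.
  apply: cvg_trans C; apply: near_eq_cvg; near=> h.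
  rewrite /= H /=.
  have h0 : h != 0 by near: h; exact: nbhs_dnbhs_neq.
  change (L + h*M = h^-1 * (f x + h*L + h^+2*M - f x)).
  by field.
split; first by apply/cvg_ex; exists L.
exact: cvg_lim.
Unshelve. all: by end_near.
Qed.

Definition QL (f : V -> R) := exists (D : V -> V -> R) (M : V -> R) (E : V -> V -> R),
  [/\ forall x h u, f (h *: u + x) = f x + h * D x u + h ^+ 2 * M u,
      forall x h u w, D (h *: w + x) u = D x u + h * E w u,
      continuous f & forall u, continuous (fun x => D x u)].

Lemma QL_deriv f : QL f -> forall u,
  (forall x, derivable f x u) /\ QL (fun x => derive f x u).
Proof.
move=> [D [M [E [H1 H2 H3 H4]]]] u.
have dd : forall x, derivable f x u /\ derive f x u = D x u.
  by move=> x; apply: quad_derive => h; exact: H1.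
split; first by move=> x; case: (dd x).
have -> : (fun x => derive f x u) = (fun x => D x u).
  by apply: funext => x; case: (dd x).
exists (fun x w => E w u), (fun _ => 0), (fun _ _ => 0); split => //.
- by move=> x h w; rewrite H2 mulr0 addr0.
- by move=> x h w w'; rewrite mulr0 addr0.
- by move=> w; exact: cst_continuous.
Qed.

Lemma QL_iter f : QL f -> forall vs, QL (iter_dderiv vs f).
Proof.
move=> Hf; elim => [|v vs IH] //=.
by case: (QL_deriv _ IH v).
Qed.

Lemma QL_smooth f W : QL f -> smooth_on W f.
Proof.
move=> Hf vs x _; have := QL_iter _ Hf vs.
move=> H; split.
  by move=> v; case: (QL_deriv _ H v) => Hd _; exact: Hd.
by case: H => [D [M [E [_ _ H3 _]]]]; exact: H3.
Qed.

End Gen.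
Arguments QL {R V}.
Arguments quad_derive {R V}.
Arguments QL_smooth {R V}.

Section S.
Variables (R : realType) (n : nat) (A : 'M[R]_n).
Local Notation V := 'rV[R]_n.

Definition bil (x y : V) : R := \sum_(i < n) \sum_(j < n) A i j * x 0 i * y 0 j.

Lemma bilDl h u x y : bil (h *: u + x) y = h * bil u y + bil x y.
Proof.
rewrite /bil mulr_sumr -big_split; apply: eq_bigr => i _.
rewrite mulr_sumr -big_split; apply: eq_bigr => j _.
rewrite !mxE /=; ring.
Qed.

Lemma bilDr h u x y : bil y (h *: u + x) = h * bil y u + bil y x.
Proof.
rewrite /bil mulr_sumr -big_split; apply: eq_bigr => i _.
rewrite mulr_sumr -big_split; apply: eq_bigr => j _.
rewrite !mxE /=; ring.
Qed.

Lemma bil_exp h u x : bil (h *: u + x) (h *: u + x) =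
  bil x x + h * (bil x u + bil u x) + h ^+ 2 * bil u u.
Proof. rewrite bilDl !bilDr; ring. Qed.

Lemma contM (T : topologicalType) (f g : T -> R) :
  continuous f -> continuous g -> continuous (fun x => f x * g x).
Proof. by move=> cf cg x; exact: (@continuousM _ _ f g x (cf x) (cg x)). Qed.

Lemma contD (T : topologicalType) (f g : T -> R) :
  continuous f -> continuous g -> continuous (fun x => f x + g x).
Proof. by move=> cf cg x; exact: (@continuousD _ _ _ f g x (cf x) (cg x)). Qed.

Lemma contS (T : topologicalType) (F : 'I_n -> T -> R) :
  (forall i, continuous (F i)) -> continuous (fun x => \sum_(i < n) F i x).
Proof. by move=> H; apply: continuous_big => //; exact: add_continuous. Qed.

Lemma bil_cont (g h : V -> V) : continuous g -> continuous h ->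
  continuous (fun x => bil (g x) (h x)).
Proof.
move=> cg ch; apply: contS => i; apply: contS => j.
apply: contM; last first.
  by move=> x; exact: (continuous_comp (ch x) (@coord_continuous _ 1 n 0 j (h x))).
apply: contM; first exact: cst_continuous.
by move=> x; exact: (continuous_comp (cg x) (@coord_continuous _ 1 n 0 i (g x))).
Qed.

Definition Dq (x u : V) := bil x u + bil u x.

Lemma qexp x h u : qform A (h *: u + x) = qform A x + h * Dq x u + h ^+ 2 * qform A u.
Proof. exact: bil_exp. Qed.

Lemma Dq_exp x h u w : Dq (h *: w + x) u = Dq x u + h * Dq w u.
Proof. rewrite /Dq bilDl bilDr; ring. Qed.

Lemma Dq_cont u : continuous (fun x => Dq x u).
Proof.
have ci : continuous (@id V) by move=> x; exact: cvg_id.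
apply: contD.
  exact: (@bil_cont id (fun _ => u) ci (@cst_continuous _ _ u)).
exact: (@bil_cont (fun _ => u) id (@cst_continuous _ _ u) ci).
Qed.

Lemma qform_QL : QL (qform A).
Proof.
exists Dq, (qform A), Dq; split.
- exact: qexp.
- exact: Dq_exp.
- have ci : continuous (@id 'rV[R]_n) by move=> x; exact: cvg_id.
  exact: (@bil_cont id id ci ci).
- exact: Dq_cont.
Qed.

Lemma qform_derive x u : derive (qform A) x u = Dq x u.
Proof. by case: (quad_derive (qform A) x u _ _ (fun h => qexp x h u)). Qed.

End S.
Arguments bil {R n}. Arguments Dq {R n}. Arguments qexp {R n}. Arguments Dq_exp {R n}.
Arguments Dq_cont {R n}. Arguments qform_QL {R n}. Arguments qform_derive {R n}.
Arguments contM {R T}. Arguments contD {R T}.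

Lemma small_e {R : realType} (c L M : R) : 0 < c ->
  exists e : R, 0 < e /\ 0 < c + e * L + e ^+ 2 * M.
Proof.
move=> c0.
set S := c + `|L| + `|M|.
have S0 : 0 < S by rewrite /S; have := normr_ge0 L; have := normr_ge0 M; lra.
exists (c / S); split; first exact: divr_gt0.
have e1 : c / S <= 1 by rewrite ler_pdivrMr // mul1r /S; have := normr_ge0 L; have := normr_ge0 M; lra.
have e0 : 0 < c / S by exact: divr_gt0.
set e := c / S in e1 e0 *.
have eS : e * S = c by rewrite /e mulrVK // unitfE gt_eqF.
have hL : - `|L| <= L by have := ler_norm (- L); rewrite normrN; lra.
have hM : - `|M| <= M by have := ler_norm (- M); rewrite normrN; lra.
have aL := normr_ge0 L; have aM := normr_ge0 M.
rewrite /S !mulrDr in eS.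
have h1 : - (e * `|L|) <= e * L by rewrite -mulrN ler_pM2l.
have h2 : - (e ^+ 2 * `|M|) <= e ^+ 2 * M by rewrite -mulrN ler_pM2l // exprn_gt0.
have h3 : e ^+ 2 * `|M| <= e * `|M| by rewrite expr2 -mulrA ler_piMl // mulr_ge0 // ltW.
have h4 : 0 < e * c by exact: mulr_gt0.
lra.
Qed.

Theorem lemma1 (R : realType) (n : nat) (A : 'M[R]_n) (a b : 'rV[R]_n) :
  (forall i, 0 <= a 0 i) -> (forall i, 0 <= b 0 i) ->
  0 < qform A a -> qform A b < 0 ->
  exists U : set 'rV[R]_n,
    [/\ open U,
        U `<=` [set x | forall i, 0 < x 0 i],
        (U `&` [set x | qform A x = 0]) !=set0 &
        smooth_hypersurface_of U (U `&` [set x | qform A x = 0])].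
Proof.
move=> a0 b0 Qa Qb.
pose one : 'rV[R]_n := const_mx 1.
have [ea [ea0 Hea]] := small_e (qform A a) (Dq A a one) (qform A one) Qa.
have Qb0 : 0 < - qform A b by rewrite oppr_gt0.
have [eb [eb0 Heb]] := small_e (- qform A b) (- Dq A b one) (- qform A one) Qb0.
pose a' := ea *: one + a; pose b' := eb *: one + b.
have Qa' : 0 < qform A a' by rewrite /a' qexp.
have Qb' : qform A b' < 0 by rewrite /b' qexp; rewrite !mulrN in Heb; lra.
have a'p : forall i, 0 < a' 0 i.
  by move=> i; rewrite /a' /one !mxE mulr1; have := a0 i; lra.
have b'p : forall i, 0 < b' 0 i.
  by move=> i; rewrite /b' /one !mxE mulr1; have := b0 i; lra.
pose v0 := b' - a'.
pose L := Dq A a' v0; pose M := qform A v0.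
have qt : forall t, qform A (t *: v0 + a') = qform A a' + t * L + t ^+ 2 * M.
  by move=> t; exact: qexp.
have q1 : qform A a' + L + M = qform A b'.
  by have := qt 1; rewrite scale1r /v0 subrK expr1n !mul1r => ->.
pose f := fun t : R => qform A a' + t * L + t * t * M.
have ci : continuous (fun t : R => t) by move=> x; exact: cvg_id.
have cf : continuous f.
  apply: contD; first apply: contD; first exact: cst_continuous.
  - by apply: contM => //; exact: cst_continuous.
  - by apply: contM; [exact: contM| exact: cst_continuous].
have f0 : f 0 = qform A a' by rewrite /f !mul0r !addr0.
have f1 : f 1 = qform A b' by rewrite /f !mul1r.
have [t0 t0I ft0] : exists2 c, c \in `[0, 1] & f c = 0.
  apply: IVT; first exact: ler01.
    exact: continuous_subspaceT.
  rewrite f0 f1; apply/andP; split.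
    by rewrite ge_min; apply/orP; right; exact: ltW.
  by rewrite le_max; apply/orP; left; exact: ltW.
move: t0I; rewrite in_itv /= => /andP[t0ge t0le].
pose p := t0 *: v0 + a'.
have Qp : qform A p = 0 by rewrite /p qt -ft0 /f expr2.
have Dp : Dq A p v0 = L + t0 * (M + M) by rewrite /p Dq_exp.
have Dpn : Dq A p v0 != 0.
  rewrite Dp; apply/eqP => H.
  have eL : L = - (t0 * (M + M)) by lra.
  have ft : qform A a' + t0 * L + t0 * t0 * M = 0 by exact: ft0.
  rewrite eL in ft q1.
  have E1 : qform A a' = t0 * t0 * M by lra.
  have E2 : qform A b' = M * ((1 - t0) * (1 - t0)).
    rewrite -q1 E1; ring.
  have Mp : 0 < M.
    rewrite ltNge; apply/negP => M0.
    have : t0 * t0 * M <= 0 by apply: mulr_ge0_le0 => //; exact: mulr_ge0.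
    lra.
  have : 0 <= M * ((1 - t0) * (1 - t0)) by apply: mulr_ge0; [exact: ltW| rewrite -expr2; exact: sqr_ge0].
  lra.
have pp : forall i, 0 < p 0 i.
  move=> i.
  have -> : p 0 i = t0 * (b' 0 i - a' 0 i) + a' 0 i by rewrite /p /v0 !mxE.
  have ha := a'p i; have hb := b'p i.
  have [->|t0n] := eqVneq t0 0; first by rewrite mul0r add0r.
  have t0p : 0 < t0 by rewrite lt0r t0n.
  have : 0 < t0 * b' 0 i by exact: mulr_gt0.
  have : 0 <= (1 - t0) * a' 0 i by apply: mulr_ge0; [lra| exact: ltW].
  lra.
have pre : forall (g : 'rV[R]_n -> R) (S : set R), continuous g -> open S -> S (g p) ->
    \forall x \near p, S (g x).
  move=> g S cg oS Sg; exact: (cg p _ (open_nbhs_nbhs (conj oS Sg))).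
have H1 : forall i, \forall x \near p, 0 < (x : 'rV[R]_n) 0 i.
  move=> i; exact: (pre (fun x => x 0 i) [set y | 0 < y] (@coord_continuous R 1 n 0 i) (@open_gt R 0) (pp i)).
have H2 : \forall x \near p, Dq A x v0 != 0.
  exact: (pre (fun x => Dq A x v0) [set y | y != 0] (Dq_cont A v0) (@open_neq R 0) Dpn).
have HN : \forall x \near p, (forall i, 0 < (x : 'rV[R]_n) 0 i) /\ Dq A x v0 != 0.
  have H3 := filter_forall _ H1.
  near=> x; split; [near: x; exact: H3 | near: x; exact: H2].
move/nbhs_ballP: HN => [r r0 Hr].
exists (ball p r); split.
- exact: ball_open.
- by move=> x /Hr [].
- by exists p; split; [exact: ballxx | exact: Qp].
- split; first by move=> x [].
  move=> x [xU xZ]; exists (ball p r), (qform A); split; [split|].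
  + exact: ball_open.
  + exact: xU.
  + by [].
  + exact: (QL_smooth _ _ (qform_QL A)).
  + apply/seteqP; split.
      by move=> y [[Uy Qy] _].
    by move=> y [Uy Qy].
  + move=> y [yU _] _; exists v0; rewrite qform_derive; by case: (Hr y yU).
Unshelve. all: by end_near.
Qed.
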